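(* Consider the uncoded caching problem: maximize $G(X)=\sum_{u=1}^U(\omega_{0,u}-\bar D_u)$ over sets $X\subseteq S=\{s_f^h: 1\le f\le F,\ 1\le h\le H\}$ satisfying $|X\cap S_h|\le M$ for all $h=1,\dots,H$, where $S_h=\{s_1^h,\dots,s_F^h\}$ and $X$ corresponds to the placement matrix $x_{f,h}=\mathbf{1}[s_f^h\in X]$, and $$\bar D_u=\sum_{j=1}^{|\mathcal{H}(u)|-1}\omega_{(j)_u,u}\sum_{f=1}^F\Big[\prod_{i=1}^{j-1}(1-x_{f,(i)_u})\Big]x_{f,(j)_u}P_f+\omega_{0,u}\sum_{f=1}^F\Big[\prod_{i=1}^{|\mathcal{H}(u)|-1}(1-x_{f,(i)_u})\Big]P_f.$$ The greedy algorithm, which starts from $X=\emptyset$ and repeatedly adds to $X$ an element $s\in S\setminus X$ with the largest marginal value $G(X\cup\{s\})-G(X)$ among those with $X\cup\{s\}$ still feasible, stopping when no feasible element can be added or the largest marginal value is zero, outputs a feasible $X_{\rm greedy}$ with $G(X_{\rm greedy})\ge \tfrac12\max\{G(X): X \text{ feasible}\}$.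
   Context: Setting: helpers $\{0,1,\dots,H\}$, where helper $0$ is the base station; users $\{1,\dots,U\}$; files $\{1,\dots,F\}$ with request probabilities $P_f\ge0$ summing to $1$; each helper $h\ge1$ has cache capacity $M$ files. A bipartite graph with edge set $\mathcal{E}$ between helpers and users, with $(0,u)\in\mathcal{E}$ for all $u$; $\mathcal{H}(u)=\{h:(h,u)\in\mathcal{E}\}$. Nonnegative reals $\omega_{h,u}$ (per-bit download delays) satisfy $\omega_{0,u}\ge\omega_{h,u}$ for $(h,u)\in\mathcal{E}$, and $\omega_{h,u}=\omega_\infty$ (a constant much larger than $\max_u\omega_{0,u}$) for $(h,u)\notin\mathcal{E}$. $(j)_u$ denotes the helper of $\mathcal{H}(u)$ with the $j$-th smallest delay to $u$, ordered so that $(|\mathcal{H}(u)|)_u=0$. Empty products equal $1$ and empty sums equal $0$. *)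

(* Defs.v *)
From HB Require Import structures.
From mathcomp Require Import all_boot all_order all_algebra.
Set Implicit Arguments. Unset Strict Implicit. Unset Printing Implicit Defensive.
Import Order.TTheory GRing.Theory Num.Theory.
Local Open Scope ring_scope.

(* Helpers are 'I_H.+1 (helper ord0 = base station), users 'I_U, files 'I_F.
   The ground set S = {s_f^h : h >= 1} is encoded as pairs (f, h) with h != ord0. *)

Section Caching.
Variables (R : realFieldType) (H U F : nat).
Variable P : 'I_F -> R.
Variable omega : 'I_H.+1 -> 'I_U -> R.
(* hs u = [(1)_u; ...; (|H(u)|-1)_u] : the non-base-station helpers connected
   to u, ordered by nondecreasing delay; (|H(u)|)_u = 0 is the base station. *)
Variable hs : 'I_U -> seq 'I_H.+1.

Definition Sset : {set 'I_F * 'I_H.+1} := [set p | p.2 != ord0].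

Definition xfh (X : {set 'I_F * 'I_H.+1}) (f : 'I_F) (h : 'I_H.+1) : R :=
  ((f, h) \in X)%:R.

Definition Dbar (X : {set 'I_F * 'I_H.+1}) (u : 'I_U) : R :=
  \sum_(j < size (hs u))
     omega (nth ord0 (hs u) j) u *
       \sum_(f < F) ((\prod_(i < j) (1 - xfh X f (nth ord0 (hs u) i)))
                      * xfh X f (nth ord0 (hs u) j) * P f)
  + omega ord0 u *
       \sum_(f < F) ((\prod_(i < size (hs u)) (1 - xfh X f (nth ord0 (hs u) i))) * P f).

Definition Gobj (X : {set 'I_F * 'I_H.+1}) : R :=
  \sum_(u < U) (omega ord0 u - Dbar X u).

Variable M : nat.

Definition feasible (X : {set 'I_F * 'I_H.+1}) : bool :=
  (X \subset Sset) &&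
  [forall h : 'I_H.+1, (h != ord0) ==> (#|[set f | (f, h) \in X]| <= M)%N].

Definition can_add (X : {set 'I_F * 'I_H.+1}) (s : 'I_F * 'I_H.+1) : bool :=
  [&& s \notin X, s \in Sset & feasible (s |: X)].

Definition gain (X : {set 'I_F * 'I_H.+1}) (s : 'I_F * 'I_H.+1) : R :=
  Gobj (s |: X) - Gobj X.

Inductive greedy_reach : {set 'I_F * 'I_H.+1} -> Prop :=
| greedy_start : greedy_reach set0
| greedy_step X s : greedy_reach X -> can_add X s ->
    (forall t, can_add X t -> gain X t <= gain X s) ->
    0 < gain X s -> greedy_reach (s |: X).

Definition greedy_output (X : {set 'I_F * 'I_H.+1}) : Prop :=
  greedy_reach X /\ forall s, can_add X s -> gain X s <= 0.

End Caching.

(* Main.v *)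
Require Import Defs.
From HB Require Import structures.
From mathcomp Require Import all_boot all_order all_algebra.
From mathcomp Require Import ring lra zify.
Import Order.TTheory GRing.Theory Num.Theory.
Set Implicit Arguments. Unset Strict Implicit. Unset Printing Implicit Defensive.
Local Open Scope ring_scope.

Lemma argmax_ex (R : realDomainType) (T : finType) (p : pred T) (g : T -> R) (t0 : T) :
  p t0 -> exists2 s, p s & forall t, p t -> g t <= g s.
Proof.
move=> H; have := @real_arg_maxP R T t0 p g H (fun i _ => num_real (g i)).
by case=> s ps hs; exists s.
Qed.

Section Valu.
Variables (R : realFieldType) (T : eqType) (om0 : R) (om : T -> R).

Fixpoint valu (b : T -> bool) (s : seq T) : R :=
  match s with [::] => 0 | h :: s' => if b h then om0 - om h else valu b s' end.

Lemma valu_bound b s c : (forall x, x \in s -> om0 - om x <= c) -> 0 <= c -> valu b s <= c.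
Proof.
elim: s => [|h s IH] /= Hs c0 //.
case: (b h); first by apply: Hs; rewrite inE eqxx.
by apply: IH => // x xs; apply: Hs; rewrite inE xs orbT.
Qed.

Lemma valu_ge0 b s : (forall x, x \in s -> om x <= om0) -> 0 <= valu b s.
Proof.
elim: s => [|h s IH] /= Hs //.
case: (b h); first by have := Hs h (mem_head _ _); lra.
by apply: IH => x xs; apply: Hs; rewrite inE xs orbT.
Qed.

Lemma valu_0 b s : (forall h, ~~ b h) -> valu b s = 0.
Proof. by move=> Hb; elim: s => [|h s IH] //=; rewrite (negbTE (Hb h)). Qed.

Lemma valu_head b h s : path (fun a b => om a <= om b) h s -> om h <= om0 ->
  valu b s <= om0 - om h.
Proof.
move=> Hso Hh.
apply: valu_bound; last by lra.
move=> x xs.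
have := order_path_min (leT := fun a b => om a <= om b) (fun a b c => @le_trans _ _ (om a) (om b) (om c)) Hso.
move=> /allP /(_ x xs) /= ?; lra.
Qed.

Lemma valu_mono (b1 b2 : T -> bool) s : (forall x, x \in s -> om x <= om0) ->
  sorted (fun a b => om a <= om b) s ->
  (forall h, b1 h -> b2 h) -> valu b1 s <= valu b2 s.
Proof.
move=> Hs Hso Hb; elim: s Hs Hso => [|h s IH] /= Hs Hso //.
have Hs' : forall x, x \in s -> om x <= om0 by move=> x xs; apply: Hs; rewrite inE xs orbT.
have Hso' := path_sorted Hso.
case E1: (b1 h); first by rewrite (Hb _ E1).
case E2: (b2 h); last by apply: IH.
by apply: valu_head => //; apply: Hs; rewrite mem_head.
Qed.

Lemma valu_submod (b1 b2 b1' b2' d : T -> bool) s : (forall x, x \in s -> om x <= om0) ->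
  sorted (fun a b => om a <= om b) s ->
  (forall h, b1 h -> b2 h) ->
  (forall h, b1' h = d h || b1 h) -> (forall h, b2' h = d h || b2 h) ->
  valu b2' s - valu b2 s <= valu b1' s - valu b1 s.
Proof.
move=> Hs Hso Hb H1 H2; elim: s Hs Hso => [|h s IH] /= Hs Hso; first lra.
have Hs' : forall x, x \in s -> om x <= om0 by move=> x xs; apply: Hs; rewrite inE xs orbT.
have Hso' := path_sorted Hso.
rewrite H1 H2.
case E1: (b1 h); first by rewrite (Hb _ E1) !orbT; lra.
case E2: (b2 h).
  rewrite !orbT orbF.
  have : valu b1 s <= valu b1' s by apply: valu_mono => // x; rewrite H1 => ->; rewrite orbT.
  case: (d h); last lra.
  have := @valu_head b1 _ _ Hso (Hs h (mem_head _ _)); lra.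
rewrite !orbF; case: (d h); last by apply: IH.
have := @valu_mono b1 b2 s Hs' Hso' Hb; lra.
Qed.

End Valu.

Section C.
Variables (R : realFieldType) (H : nat) (om0 : R) (om : 'I_H.+1 -> R).

Definition cexp (x : 'I_H.+1 -> R) (s : seq 'I_H.+1) : R :=
  \sum_(j < size s) om (nth ord0 s j) *
     ((\prod_(i < j) (1 - x (nth ord0 s i))) * x (nth ord0 s j))
  + om0 * \prod_(i < size s) (1 - x (nth ord0 s i)).

Lemma cexp_cons x h s : cexp x (h :: s) = om h * x h + (1 - x h) * cexp x s.
Proof.
rewrite /cexp /= big_ord_recl big_ord_recl /= big_ord0 mul1r.
have Hb : forall i : nat, bump 0 i = i.+1 by move=> i; rewrite /bump leq0n.
under eq_bigr => j _ do rewrite add0n Hb big_ord_recl /=.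
under [X in om0 * (_ * X)]eq_bigr => j _ do rewrite add0n.
rewrite mulrDr mulr_sumr.

have -> : \sum_(i < size s) om (nth ord0 s i) *
     (((1 - x h) * \prod_(i0 < i) (1 - x (nth ord0 s (0 + i0)))) *
      x (nth ord0 s i))
  = \sum_(i < size s) (1 - x h) * (om (nth ord0 s i) *
       ((\prod_(i0 < i) (1 - x (nth ord0 s i0))) * x (nth ord0 s i))).
  by apply: eq_bigr => j _; under eq_bigr => i0 _ do rewrite add0n; ring.
ring.
Qed.

Lemma cexp_val (b : 'I_H.+1 -> bool) s :
  om0 - cexp (fun h => (b h)%:R) s = valu om0 om b s.
Proof.
elim: s => [|h s IH].
  by rewrite /cexp /= big_ord0 big_ord0; ring.
rewrite cexp_cons /= -IH; case: (b h) => /=; ring.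
Qed.
End C.

Section Cnt.
Variables (H F M : nat).
Notation T := ('I_F * 'I_H.+1)%type.

Definition cnt (X : {set T}) (h : 'I_H.+1) : nat := #|[set f | (f, h) \in X]|.

Lemma cnt_U1 (X : {set T}) s h :
  cnt (s |: X) h = (cnt X h + ((s.2 == h) && (s \notin X)))%N.
Proof.
case: s => f0 h0 /=; rewrite /cnt.
case: (eqVneq h0 h) => [<-|ne] /=.
  have -> : [set f | (f, h0) \in (f0, h0) |: X] = f0 |: [set f | (f, h0) \in X].
    by apply/setP => f; rewrite !inE xpair_eqE eqxx andbT.
  by rewrite cardsU1 inE addnC.
have -> : [set f | (f, h) \in (f0, h0) |: X] = [set f | (f, h) \in X].
  by apply/setP => f; rewrite !inE xpair_eqE (eq_sym h) (negbTE ne) andbF.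
by rewrite addn0.
Qed.

Lemma cnt_D1 (Z : {set T}) z h : z \in Z ->
  cnt Z h = (cnt (Z :\ z) h + (z.2 == h))%N.
Proof.
case: z => f0 h0 /= zZ; rewrite /cnt.
case: (eqVneq h0 h) => [<-|ne] /=.
  rewrite (cardsD1 f0) inE zZ addnC; congr (_ + _)%N.
  by apply: eq_card => f; rewrite !inE xpair_eqE eqxx andbT.
rewrite addn0; apply: eq_card => f; rewrite !inE xpair_eqE (eq_sym h) (negbTE ne) andbF //.
Qed.

Lemma cnt0 h : cnt set0 h = 0%N.
Proof. by rewrite /cnt; apply: eq_card0 => f; rewrite !inE. Qed.

Lemma cnt_sub (Z Y : {set T}) h : Z \subset Y -> (cnt Z h <= cnt Y h)%N.
Proof.
move=> ZY; apply: subset_leq_card; apply/subsetP => f; rewrite !inE.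
exact: (subsetP ZY).
Qed.

Lemma cnt_none (Z : {set T}) h : (forall z, z \in Z -> z.2 != h) -> cnt Z h = 0%N.
Proof.
move=> Hz; rewrite /cnt; apply: eq_card0 => f; rewrite !inE.
by apply/negP => /Hz /=; rewrite eqxx.
Qed.

Lemma feasibleP (X : {set T}) : reflect (X \subset Sset H F /\ forall h, h != ord0 -> (cnt X h <= M)%N)
  (feasible M X).
Proof.
apply: (iffP andP) => [[XS /forallP Hf]|[XS Hf]]; split => //.
  by move=> h h0; have := Hf h; rewrite h0.
by apply/forallP => h; apply/implyP; apply: Hf.
Qed.

Lemma inSset (p : T) : (p \in Sset H F) = (p.2 != ord0).
Proof. by rewrite inE. Qed.

End Cnt.

Section Main.
Variables (R : realFieldType) (H U F M : nat)
  (P : 'I_F -> R) (omega : 'I_H.+1 -> 'I_U -> R) (hs : 'I_U -> seq 'I_H.+1).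
Hypothesis P_ge0 : forall f, 0 <= P f.
Hypothesis P_sum : \sum_(f < F) P f = 1.
Hypothesis om_le : forall u h, h \in hs u -> omega h u <= omega ord0 u.
Hypothesis hs_sorted : forall u, sorted (fun a b => omega a u <= omega b u) (hs u).

Notation G := (Gobj P omega hs).
Notation vu u f X := (valu (omega ord0 u) (omega^~ u) (fun h => (f, h) \in X) (hs u)).

Lemma Dbar_eq X u : Dbar P omega hs X u =
  \sum_(f < F) P f * cexp (omega ord0 u) (omega^~ u) (xfh R X f) (hs u).
Proof.
rewrite /Dbar /cexp.
under [RHS]eq_bigr => f _ do rewrite mulrDr mulr_sumr.
rewrite big_split /= exchange_big /=.
congr (_ + _).
  by apply: eq_bigr => j _; rewrite mulr_sumr; apply: eq_bigr => f _; ring.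
by rewrite mulr_sumr; apply: eq_bigr => f _; ring.
Qed.

Lemma G_eq X : G X = \sum_(u < U) \sum_(f < F) P f * vu u f X.
Proof.
rewrite /Gobj; apply: eq_bigr => u _.
rewrite Dbar_eq.
have -> : \sum_(f < F) P f * vu u f X =
   \sum_(f < F) P f * (omega ord0 u - cexp (omega ord0 u) (omega^~ u) (xfh R X f) (hs u)).
  by apply: eq_bigr => f _; rewrite -cexp_val.
rewrite [RHS](eq_bigr (fun f => P f * omega ord0 u - P f * cexp (omega ord0 u) (omega^~ u) (xfh R X f) (hs u))); last by move=> f _; rewrite mulrBr.
by rewrite sumrB -mulr_suml P_sum mul1r.
Qed.

Lemma G_mono (X W : {set 'I_F * 'I_H.+1}) : X \subset W -> G X <= G W.
Proof.
move=> XW; rewrite !G_eq; apply: ler_sum => u _; apply: ler_sum => f _.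
apply: ler_wpM2l => //; apply: valu_mono => //; first exact: om_le.
by move=> h hX; apply: (subsetP XW).
Qed.

Lemma G_submod (X W D : {set 'I_F * 'I_H.+1}) : X \subset W -> G (D :|: W) - G W <= G (D :|: X) - G X.
Proof.
move=> XW; rewrite !G_eq -!sumrB; apply: ler_sum => u _.
rewrite -!sumrB; apply: ler_sum => f _.
rewrite -!mulrBr; apply: ler_wpM2l => //.
apply: (@valu_submod _ _ _ _ (fun h => (f, h) \in X) (fun h => (f, h) \in W)
   _ _ (fun h => (f, h) \in D)) => //; first exact: om_le.
- by move=> h hX; apply: (subsetP XW).
- by move=> h; rewrite in_setU.
- by move=> h; rewrite in_setU.
Qed.

Lemma G0 : G set0 = 0.
Proof.
rewrite G_eq big1 // => u _; rewrite big1 // => f _.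
by rewrite valu_0 ?mulr0 // => h; rewrite inE.
Qed.

Lemma gain_submod (X W : {set 'I_F * 'I_H.+1}) z : X \subset W -> gain P omega hs W z <= gain P omega hs X z.
Proof.
move=> XW; rewrite /gain; exact: G_submod [set z] XW.
Qed.



Lemma gain_ge0 (X : {set 'I_F * 'I_H.+1}) z : 0 <= gain P omega hs X z.
Proof. by rewrite /gain subr_ge0; apply: G_mono; apply: subsetUr. Qed.

Lemma reach_feasible X0 : greedy_reach P omega hs M X0 -> feasible M X0.
Proof.
elim => [|X s _ _ /and3P [_ _ fs] _ _] //.
apply/feasibleP; split; first exact: sub0set.
by move=> h _; rewrite cnt0.
Qed.

Lemma can_addP (X : {set 'I_F * 'I_H.+1}) z :
  feasible M X -> z \notin X -> z \in Sset H F ->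
  (forall h, h != ord0 -> z.2 = h -> (cnt X h < M)%N) -> can_add M X z.
Proof.
move=> /feasibleP [XS fX] zX zS Hz; rewrite /can_add zX zS /=.
apply/feasibleP; split.
  by apply/subsetP => y; rewrite in_setU1 => /orP [/eqP -> //| /(subsetP XS)].
move=> h h0; rewrite cnt_U1 zX andbT.
case: (eqVneq z.2 h) => [e|ne] /=; last by rewrite addn0; apply: fX.
by rewrite addn1; apply: Hz.
Qed.

Lemma reach_inv X0 : greedy_reach P omega hs M X0 ->
  forall (Z W : {set 'I_F * 'I_H.+1}), Z \subset Sset H F -> (forall z, z \in Z -> z \notin X0) ->
  X0 \subset W -> (forall h, cnt Z h <= cnt X0 h)%N ->
  \sum_(z in Z) gain P omega hs W z <= G X0.
Proof.
elim => [|X s reach IH cas smax spos] Z W ZS dZ XW cZ.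
  rewrite G0 big_pred0 // => z; apply/negP => zZ.
  by have := cZ z.2; rewrite cnt0 (cnt_D1 _ zZ) eqxx addn1.
have fX := reach_feasible reach.
move: (cas) => /and3P [sX sS fs].
have XsX : X \subset s |: X by apply: subsetUr.
have GsX : G (s |: X) = gain P omega hs X s + G X by rewrite /gain; ring.
case: (pickP [pred z | (z \in Z) && (z.2 == s.2)]) => [z /andP [zZ /eqP zs]|none].
  rewrite (bigD1 z) //=.
  have -> : \sum_(i in Z | i != z) gain P omega hs W i = \sum_(i in Z :\ z) gain P omega hs W i.
    by apply: eq_bigl => i; rewrite !inE andbC.
  have IH' := IH (Z :\ z) W.
  have h1 : \sum_(i in Z :\ z) gain P omega hs W i <= G X.
    apply: IH'.
    - by apply: subset_trans ZS; apply: subsetDl.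
    - move=> y; rewrite in_setD1 => /andP [_ /dZ]; rewrite in_setU1 negb_or.
      by case/andP.
    - exact: subset_trans XW.
    - move=> h; have := cZ h; rewrite (cnt_D1 _ zZ) cnt_U1 sX zs andbT.
      by case: (s.2 == h) => /=; lia.
  have zX : z \notin X by have := dZ z zZ; rewrite in_setU1 negb_or => /andP [].
  have cz : can_add M X z.
    apply: can_addP => //; first exact: (subsetP ZS).
    move=> h h0 <-; rewrite zs.
    move: fs => /feasibleP [_ /(_ s.2)]; rewrite cnt_U1 eqxx sX addn1.
    by move=> Hm; apply: Hm; rewrite -inSset.
  have g1 : gain P omega hs W z <= gain P omega hs X z.
    by apply: gain_submod; apply: subset_trans XW.
  have g2 := smax z cz.
  lra.
have h1 : \sum_(i in Z) gain P omega hs W i <= G X.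
  apply: IH => //.
  - by move=> y yZ; have := dZ y yZ; rewrite in_setU1 negb_or => /andP [].
  - exact: subset_trans XW.
  - move=> h; case: (eqVneq s.2 h) => [<-|ne].
      rewrite (@cnt_none _ _ Z) // => y yZ; have := none y; rewrite /= yZ /=.
      by move/negbT.
    by have := cZ h; rewrite cnt_U1 (negbTE ne) /= addn0.
lra.
Qed.

Lemma G_union_seq (A : {set 'I_F * 'I_H.+1}) (s : seq ('I_F * 'I_H.+1)) :
  G (A :|: [set x in s]) - G A <= \sum_(b <- s) gain P omega hs A b.
Proof.
elim: s => [|b s IH].
  have -> : [set x in [::]] = set0 :> {set 'I_F * 'I_H.+1} by apply/setP => x; rewrite !inE.
  by rewrite setU0 big_nil; lra.
have -> : A :|: [set x in b :: s] = b |: (A :|: [set x in s]).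
  by apply/setP => x; rewrite !inE; case: (x == b); rewrite ?orbT.
rewrite big_cons.
have := gain_submod b (subsetUl A [set x in s]).
rewrite /gain; lra.
Qed.

Lemma exists_output n (X : {set 'I_F * 'I_H.+1}) : greedy_reach P omega hs M X ->
  (#|Sset H F :\: X| <= n)%N -> exists Xg, greedy_output P omega hs M Xg.
Proof.
elim: n X => [|n IH] X reach hn.
  exists X; split => // s /and3P [sX sS _].
  by move: hn; rewrite (cardsD1 s (Sset H F :\: X)) in_setD sX sS.
case: (pickP [pred t | can_add M X t && (0 < gain P omega hs X t)]) => [t0 /andP [c0 p0]|none].
  have [s cs smax] := argmax_ex (gain P omega hs X) c0.
  apply: (IH (s |: X)).
    by apply: greedy_step => //; apply: lt_le_trans (smax _ c0).
  move: (cs) => /and3P [sX sS _].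
  have -> : Sset H F :\: (s |: X) = (Sset H F :\: X) :\ s.
    by apply/setP => x; rewrite !inE negb_or andbA [(x != s) && _]andbC.
  by move: hn; rewrite (cardsD1 s (Sset H F :\: X)) in_setD sX sS.
exists X; split => // s cs; have := none s; rewrite /= cs /= => /negbT.
by rewrite -leNgt.
Qed.

Lemma main_result : (exists Xg, greedy_output P omega hs M Xg) /\
  (forall Xg, greedy_output P omega hs M Xg ->
     feasible M Xg /\ forall Y, feasible M Y -> G Y / 2 <= G Xg).
Proof.
split; first exact: (@exists_output #|Sset H F :\: set0| set0 (greedy_start _ _ _ _)).
move=> Xg [reach stop]; have fXg := reach_feasible reach; split => // Y fY.
move: (fY) => /feasibleP [YS cY].
set B := Y :\: Xg.
have e1 : G Y <= G (Xg :|: B).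
  apply: G_mono; apply/subsetP => y yY; rewrite !inE yY.
  by case: (y \in Xg).
have e2 := G_union_seq Xg (enum B).
rewrite set_enum big_enum in e2.
rewrite (bigID (fun b => ~~ feasible M (b |: Xg))) /= in e2.
set Z := [set b in B | ~~ feasible M (b |: Xg)].
have e3 : \sum_(i in B | ~~ feasible M (i |: Xg)) gain P omega hs Xg i =
          \sum_(i in Z) gain P omega hs Xg i.
  by apply: eq_bigl => i; rewrite !inE.
have e4 : \sum_(i in B | ~~ ~~ feasible M (i |: Xg)) gain P omega hs Xg i <= 0.
  apply: sumr_le0 => i /andP [iB]; rewrite negbK => fi.
  apply: stop; rewrite /can_add fi andbT.
  move: iB; rewrite !inE => /andP [-> iY] /=.
  by move: (subsetP YS i iY); rewrite inE.
have ZY : Z \subset Y by apply/subsetP => z; rewrite !inE => /andP [/andP [_ ->]].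
have e5 : \sum_(i in Z) gain P omega hs Xg i <= G Xg.
  apply: (reach_inv reach) => //.
  - exact: subset_trans ZY YS.
  - by move=> z; rewrite !inE => /andP [/andP [->]].
  - move=> h; case: (pickP [pred z | (z \in Z) && (z.2 == h)]) => [z /andP [zZ /eqP zh]|none].
      move: (zZ); rewrite !inE => /andP [/andP [zX zY] nf].
      have zS : z \in Sset H F := subsetP YS z zY.
      have h0 : h != ord0 by rewrite -zh -inSset.
      have hM : (M <= cnt Xg h)%N.
        rewrite leqNgt; apply/negP => lt; move: nf; apply/negP; rewrite negbK.
        have Hc : forall h', h' != ord0 -> z.2 = h' -> (cnt Xg h' < M)%N.
          by move=> h' _ e; rewrite -e zh.
        by have := can_addP fXg zX zS Hc; case/and3P.
      apply: leq_trans hM; apply: leq_trans (cY h h0); exact: cnt_sub.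
    by rewrite (@cnt_none _ _ Z) // => y yZ; have := none y; rewrite /= yZ /= => /negbT.
have e6 := G_mono (subsetUl Xg B).
lra.
Qed.

End Main.

Theorem mainTheorem4 (R : realFieldType) (H U F M : nat)
  (P : 'I_F -> R) (E : 'I_H.+1 -> 'I_U -> bool)
  (omega : 'I_H.+1 -> 'I_U -> R) (omega_inf : R)
  (hs : 'I_U -> seq 'I_H.+1) :
  (forall f, 0 <= P f) ->
  \sum_(f < F) P f = 1 ->
  (forall u, E ord0 u) ->
  (forall h u, 0 <= omega h u) ->
  (forall h u, E h u -> omega h u <= omega ord0 u) ->
  (forall u, omega ord0 u < omega_inf) ->
  (forall h u, ~~ E h u -> omega h u = omega_inf) ->
  (forall u, uniq (hs u)) ->
  (forall u h, (h \in hs u) = (h != ord0) && E h u) ->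
  (forall u, sorted (fun a b => omega a u <= omega b u) (hs u)) ->
  (exists Xg, greedy_output P omega hs M Xg) /\
  (forall Xg, greedy_output P omega hs M Xg ->
     feasible M Xg /\
     forall Y, feasible M Y -> Gobj P omega hs Y / 2 <= Gobj P omega hs Xg).
Proof.
move=> P0 Ps _ _ omE _ _ _ hsE hsS.
apply: main_result => // u h; rewrite hsE => /andP [_ /omE] //.
Qed.
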